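(* Let $A\in\mathbb{C}^{n\times n}$, $B\in\mathbb{C}^{n\times m}$, $C\in\mathbb{C}^{p\times n}$, let $j\ge 1$, and let $\mathcal{R}(X):=A^HX+XA+C^HC-XBB^HX$. Suppose $A^HV_{j+1}\underline{K}_j=V_{j+1}\underline{H}_j$ is an orthonormal block rational Arnoldi decomposition (as defined in the context) with $V_{j+1}\in\mathbb{C}^{n\times (j+1)p}$, $\underline{K}_j,\underline{H}_j\in\mathbb{C}^{(j+1)p\times jp}$, where $\underline{K}_j$ has full column rank $jp$, and let $\tilde C\in\mathbb{C}^{(j+1)p\times p}$ satisfy $C^H=V_{j+1}\tilde C$. Let $\underline{L}_j\in\mathbb{C}^{(j+1)p\times jp}$ be such that $\underline{L}_j^H\underline{K}_j$ is nonsingular. Define $$A_j=\underline{H}_j^H\underline{L}_j(\underline{K}_j^H\underline{L}_j)^{-1},\quad B_j=\underline{K}_j^HV_{j+1}^HB,\quad C_j=\tilde C^H\underline{L}_j(\underline{K}_j^H\underline{L}_j)^{-1},$$ let $Y_j=Y_j^H\in\mathbb{C}^{jp\times jp}$ be a Hermitian solution of $A_j^HY_j+Y_jA_j+C_j^HC_j-Y_jB_jB_j^HY_j=0$, and set $X_j=V_{j+1}\underline{K}_jY_j\underline{K}_j^HV_{j+1}^H$. Let $U\in\mathbb{C}^{(j+1)p\times p}$ be a matrix whose columns form a basis of $\operatorname{range}(\underline{L}_j)^\perp$ and $W\in\mathbb{C}^{(j+1)p\times p}$ a matrix whose columns form a basis of $\operatorname{range}(\underline{K}_j)^\perp$ (orthogonal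 complements in $\mathbb{C}^{(j+1)p}$). Then $W^HU$ is nonsingular; define $$T=\underline{K}_jY_j\underline{H}_j^HW(U^HW)^{-1}+\bigl(\tilde C-\tfrac12 U(W^HU)^{-1}W^H\tilde C\bigr)\tilde C^HW(U^HW)^{-1}\in\mathbb{C}^{(j+1)p\times p},$$ and let $[U~~T]=QR$ be an economy-size QR decomposition with $Q\in\mathbb{C}^{(j+1)p\times 2p}$ having orthonormal columns and $R\in\mathbb{C}^{2p\times 2p}$. Then $\mathcal{R}(X_j)=V_{j+1}(UT^H+TU^H)V_{j+1}^H$, so $\operatorname{rank}\mathcal{R}(X_j)\le 2p$, and for every unitarily invariant norm $\|\cdot\|$, $$\|\mathcal{R}(X_j)\|=\left\|R\begin{bmatrix}0&I_p\\ I_p&0\end{bmatrix}R^H\right\|.$$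
   Context: Shifts: a set $\mathcal{S}_j=\{s_1,\dots,s_j\}\subset\mathbb{C}$ (finite) disjoint from the spectrum of $A^H$. The block rational Krylov space is $\mathfrak{K}_{j+1}=\operatorname{range}([C^H,(A^H-s_1I)^{-1}C^H,\dots,(A^H-s_jI)^{-1}C^H])$, assumed to have dimension $(j+1)p$. An orthonormal block rational Arnoldi decomposition (BRAD) is a relation $A^HV_{j+1}\underline{K}_j=V_{j+1}\underline{H}_j$ where: the columns of $V_{j+1}\in\mathbb{C}^{n\times(j+1)p}$ are orthonormal and span $\mathfrak{K}_{j+1}$; $\underline{H}_j,\underline{K}_j\in\mathbb{C}^{(j+1)p\times jp}$ are block upper Hessenberg with $p\times p$ blocks $H_{ik},K_{ik}$, where for each $i=1,\dots,j$ at least one of the subdiagonal blocks $H_{i+1,i},K_{i+1,i}$ is nonsingular and $\beta_iK_{i+1,i}=\gamma_iH_{i+1,i}$ for scalars with $|\beta_i|+|\gamma_i|\neq0$, the quotients $\beta_i/\gamma_i$ (the poles) being the shifts $s_1,\dots,s_j$. Here $\underline{K}_j$ is of full column rank. *)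

(* Defs.v *)
From HB Require Import structures.
From mathcomp Require Import all_boot all_order all_algebra.
From mathcomp Require Import sesquilinear spectral.
Set Implicit Arguments. Unset Strict Implicit. Unset Printing Implicit Defensive.
Import Order.TTheory GRing.Theory Num.Theory.
Local Open Scope ring_scope.

(* We work over an arbitrary numClosedFieldType C (e.g. the complex numbers);
   M ^t* is the conjugate transpose M^H (from mathcomp's spectral.v). *)

Section Defs.
Variable C : numClosedFieldType.
Local Open Scope sesquilinear_scope.

(* entry (x,y) of M as natural-number indices; 0 when out of range *)
Definition mxentry r c (M : 'M[C]_(r, c)) (x y : nat) : C :=
  \sum_(u : 'I_r | val u == x) \sum_(v : 'I_c | val v == y) M u v.

(* the p x p block (i,k) (0-based block indices) of M *)
Definition mxblk p r c (M : 'M[C]_(r, c)) (i k : nat) : 'M[C]_p :=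
  \matrix_(a < p, b < p) mxentry M (i * p + a) (k * p + b).

Definition block_upper_hessenberg p r c (M : 'M[C]_(r, c)) : Prop :=
  forall (x : 'I_r) (y : 'I_c), (y %/ p + 1 < x %/ p)%N -> M x y = 0.

(* the block rational Krylov space K_{j+1}, represented as a row space of
   transposed generators: range [C^H, (A^H - s_0 I)^{-1} C^H, ...,
   (A^H - s_{j-1} I)^{-1} C^H]  (shifts s_0..s_{j-1} = s_1..s_j of the paper) *)
Definition rat_krylov n p j (A : 'M[C]_n) (Cm : 'M[C]_(p, n)) (s : nat -> C)
  : 'M[C]_n :=
  (<< (Cm ^t*)^T >> +
   \sum_(i < j) << (invmx (A ^t* - s i *: 1%:M) *m Cm ^t*)^T >>)%MS.

Definition orth_BRAD n p j (A : 'M[C]_n) (Cm : 'M[C]_(p, n)) (s : nat -> C)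
  (V : 'M[C]_(n, j.+1 * p)) (K H : 'M[C]_(j.+1 * p, j * p)) : Prop :=
  (forall i, (i < j)%N -> ~~ eigenvalue (A ^t*) (s i)) /\
  \rank (rat_krylov j A Cm s) = (j.+1 * p)%N /\
  V ^t* *m V = 1%:M /\
  (V^T == rat_krylov j A Cm s)%MS /\
  A ^t* *m V *m K = V *m H /\
  block_upper_hessenberg p H /\ block_upper_hessenberg p K /\
  (forall i, (i < j)%N ->
     (mxblk p H i.+1 i \in unitmx \/ mxblk p K i.+1 i \in unitmx) /\
     exists beta gamma : C, `|beta| + `|gamma| != 0 /\ gamma != 0 /\
       beta / gamma = s i /\
       beta *: mxblk p K i.+1 i = gamma *: mxblk p H i.+1 i) /\
  \rank K = (j * p)%N.

Definition riccati n m p (A : 'M[C]_n) (B : 'M[C]_(n, m)) (Cm : 'M[C]_(p, n))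
  (X : 'M[C]_n) : 'M[C]_n :=
  A ^t* *m X + X *m A + Cm ^t* *m Cm - X *m B *m B ^t* *m X.

Definition perp_basis r k c (U : 'M[C]_(r, k)) (L : 'M[C]_(r, c)) : Prop :=
  row_free U^T /\
  forall v : 'cV[C]_r, (L ^t* *m v == 0) = (v^T <= U^T)%MS.

Definition unitary k (M : 'M[C]_k) : Prop := M *m M ^t* = 1%:M.

(* a unitarily invariant norm, as a family over all square dimensions,
   consistent under zero padding (as for norms induced by a symmetric
   gauge function of the singular values) *)
Definition unitarily_invariant_norm (N : forall k, 'M[C]_k -> C) : Prop :=
  (forall k (M : 'M[C]_k), N k M \is Num.real /\ 0 <= N k M) /\
  (forall k (M : 'M[C]_k), N k M = 0 -> M = 0) /\
  (forall k (a : C) (M : 'M[C]_k), N k (a *: M) = `|a| * N k M) /\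
  (forall k (M1 M2 : 'M[C]_k), N k (M1 + M2) <= N k M1 + N k M2) /\
  (forall k (P Q M : 'M[C]_k), unitary P -> unitary Q ->
      N k (P *m M *m Q) = N k M) /\
  (forall k l (M : 'M[C]_k), N (k + l)%N (block_mx M 0 0 (0 : 'M_l)) = N k M).

End Defs.

(* Main.v *)
Require Import Defs.
From HB Require Import structures.
From mathcomp Require Import all_boot all_order all_algebra.
From mathcomp Require Import sesquilinear spectral.
Import Order.TTheory GRing.Theory Num.Theory.
Local Open Scope ring_scope.
Local Open Scope sesquilinear_scope.

Set Implicit Arguments. Unset Strict Implicit. Unset Printing Implicit Defensive.


Section Adj.
Variable C : numClosedFieldType.
Implicit Types (a : C).

Lemma cadjM m n k (A : 'M[C]_(m, n)) (B : 'M[C]_(n, k)) :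
  (A *m B) ^t* = B ^t* *m A ^t*.
Proof. by rewrite trmx_mul map_mxM. Qed.
Lemma cadjD m n (A B : 'M[C]_(m, n)) : (A + B) ^t* = A ^t* + B ^t*.
Proof. by rewrite linearD map_mxD. Qed.
Lemma cadjB m n (A B : 'M[C]_(m, n)) : (A - B) ^t* = A ^t* - B ^t*.
Proof. by rewrite linearB map_mxB. Qed.
Lemma cadjN m n (A : 'M[C]_(m, n)) : (- A) ^t* = - A ^t*.
Proof. by rewrite linearN map_mxN. Qed.
Lemma cadjZ m n a (A : 'M[C]_(m, n)) : (a *: A) ^t* = a^* *: A ^t*.
Proof. by rewrite linearZ map_mxZ. Qed.
Lemma cadj0 m n : (0 : 'M[C]_(m, n)) ^t* = 0.
Proof. by rewrite trmx0 map_mx0. Qed.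
Lemma cadj1 n : (1%:M : 'M[C]_n) ^t* = 1%:M.
Proof. by rewrite trmx1 map_mx1. Qed.
Lemma cadjK m n (A : 'M[C]_(m, n)) : A ^t* ^t* = A.
Proof. exact: trmxCK. Qed.
Lemma cadjV n (A : 'M[C]_n) : (invmx A) ^t* = invmx (A ^t*).
Proof. by rewrite trmx_inv map_invmx. Qed.
Lemma cadj_unit n (A : 'M[C]_n) : (A ^t* \in unitmx) = (A \in unitmx).
Proof. by rewrite map_unitmx unitmx_tr. Qed.
Lemma cadj_row m n1 n2 (A : 'M[C]_(m, n1)) (B : 'M[C]_(m, n2)) :
  (row_mx A B) ^t* = col_mx (A ^t*) (B ^t*).
Proof. by rewrite tr_row_mx map_col_mx. Qed.
Lemma cadj_col m1 m2 n (A : 'M[C]_(m1, n)) (B : 'M[C]_(m2, n)) :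
  (col_mx A B) ^t* = row_mx (A ^t*) (B ^t*).
Proof. by rewrite tr_col_mx map_row_mx. Qed.
Lemma cadj_inj m n (A B : 'M[C]_(m, n)) : A ^t* = B ^t* -> A = B.
Proof. by move=> h; rewrite -(cadjK A) h cadjK. Qed.
Lemma cadj_eq0 m n (A : 'M[C]_(m, n)) : A ^t* = 0 -> A = 0.
Proof. by move=> h; apply: cadj_inj; rewrite h cadj0. Qed.
End Adj.



Section Perp.
Variable C : numClosedFieldType.
Local Notation orth B :=
  (orthomx (@Num.conj_op C) (mx_of_hermitian (hermitian1mx _)) B).

Lemma trC m n (L : 'M[C]_(m, n)) : (L ^t*)^T = (L^T) ^t*.
Proof. by rewrite map_trmx. Qed.

Lemma perp_vec r k c (U : 'M[C]_(r, k)) (L : 'M[C]_(r, c)) :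
  perp_basis U L -> forall x : 'rV[C]_r,
  (x <= U^T)%MS = (x *m (L^T) ^t* == 0).
Proof.
move=> hb x; have hP := proj2 hb.
by rewrite -(trmxK x) -hP -trmx_eq0 trmx_mul trmxK trC.
Qed.

Lemma perp_eq r k c (U : 'M[C]_(r, k)) (L : 'M[C]_(r, c)) :
  perp_basis U L -> (U^T :=: orth (L^T))%MS.
Proof.
move=> hb; apply/eqmxP/andP; split; apply/row_subP => i.
  by rewrite orthomx1E -(perp_vec hb) row_sub.
by rewrite (perp_vec hb) -orthomx1E row_sub.
Qed.

Lemma perp_ker r k c (U : 'M[C]_(r, k)) (L : 'M[C]_(r, c)) :
  perp_basis U L -> L ^t* *m U = 0.
Proof.
move=> hb; have : (U^T <= orth (L^T))%MS by rewrite -(perp_eq hb).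
rewrite orthomx1E.
move/eqP => h; apply: trmx_inj; rewrite trmx_mul trC h trmx0 //.
Qed.

Lemma perp_range r k c (U : 'M[C]_(r, k)) (L : 'M[C]_(r, c)) :
  perp_basis U L -> forall q (y : 'M[C]_(r, q)),
  U ^t* *m y = 0 -> exists z : 'M[C]_(c, q), y = L *m z.
Proof.
move=> hb q y hy.
have h1 : (y^T <= orth (U^T))%MS.
  by rewrite orthomx1E -trC -trmx_mul hy trmx0.
have h2 : (orth (U^T) <= L^T)%MS.
  have h : (orth (orth (L^T)) <= L^T)%MS by rewrite ortho_id.
  apply: submx_trans h; rewrite submx_ortho (perp_eq hb) //.
have /submxP [D hD] := submx_trans h1 h2.
by exists D^T; rewrite -(trmxK y) hD trmx_mul trmxK.
Qed.

Lemma perp_free r k c (U : 'M[C]_(r, k)) (L : 'M[C]_(r, c)) :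
  perp_basis U L -> forall q (z : 'M[C]_(k, q)), U *m z = 0 -> z = 0.
Proof.
move=> hb q z hz; case: hb => hf _; apply: trmx_inj; rewrite trmx0.
apply: (row_free_inj hf); rewrite mul0mx -trmx_mul hz trmx0 //.
Qed.

Lemma unit_ker k (M : 'M[C]_k) :
  (forall q (v : 'M[C]_(k, q)), M *m v = 0 -> v = 0) -> M \in unitmx.
Proof.
move=> h; have := h _ _ (mulmx_coker M) => /(congr1 mxrank).
rewrite mxrank_coker mxrank0 => /eqP; rewrite subn_eq0 => hr.
by rewrite -row_full_unit /row_full eqn_leq rank_leq_col hr.
Qed.
End Perp.



Section Norm.
Variable C : numClosedFieldType.
Variable N : forall k, 'M[C]_k -> C.
Hypothesis hN : unitarily_invariant_norm N.
Local Notation orth B :=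
  (orthomx (@Num.conj_op C) (mx_of_hermitian (hermitian1mx _)) B).

Lemma Ncast k l (e : k = l) (M : 'M[C]_k) : N (castmx (e, e) M) = N M.
Proof. by case: l / e; rewrite castmx_id. Qed.

Lemma Nunit k l (P : 'M[C]_(l, k)) (M : 'M[C]_k) : k = l ->
  P ^t* *m P = 1%:M -> N (P *m M *m P ^t*) = N M.
Proof.
move=> e; case: l / e in P *; move=> hP.
have [_ [_ [_ [_ [hU _]]]]] := hN.
apply: hU; rewrite /unitary ?cadjK //; exact: mulmx1C.
Qed.

Lemma Niso n k (Z : 'M[C]_(n, k)) (M : 'M[C]_k) :
  Z ^t* *m Z = 1%:M -> N (Z *m M *m Z ^t*) = N M.
Proof.
move=> hZ.
set V := Z ^t*.
have Vu : V \is unitarymx by apply/unitarymxP; rewrite /V cadjK.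
set S1 := schmidt (row_base V).
set S2 := schmidt (row_base (orth V)).
have Su : col_mx S1 S2 \is unitarymx := schmidt_complete_unitarymx V.
have rk : \rank V = k := mxrank_unitary Vu.
have S1u : S1 \is unitarymx by apply: schmidt_unitarymx; apply: rank_leq_col.
have /submxP [D hD] : (V <= S1)%MS.
  by apply: submx_trans (schmidt_sub _); rewrite eq_row_base.
have hD1 : D *m D ^t* = 1%:M.
  have -> : D *m D ^t* = D *m S1 *m (D *m S1) ^t*.
    by rewrite cadjM mulmxA -(mulmxA D) (unitarymxP S1u) mulmx1.
  by rewrite -hD; apply/unitarymxP.
have hZe : Z = S1 ^t* *m D ^t* by rewrite -cadjM -hD /V cadjK.
have -> : Z *m M *m Z ^t* =
   (col_mx S1 S2) ^t* *m block_mx (D ^t* *m M *m D) 0 0 0 *m col_mx S1 S2.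
  rewrite cadj_col mul_row_block !mulmx0 !addr0 mul_row_col mul0mx addr0.
  by rewrite hZe cadjM !cadjK !mulmxA.
have e : (\rank V + \rank (orth V))%N = n by apply: add_rank_ortho.
have := @Nunit _ _ ((col_mx S1 S2)^t*) (block_mx (D ^t* *m M *m D) 0 0 0) e.
rewrite cadjK => ->; last by apply/unitarymxP.
have [_ [_ [_ [_ [_ hB]]]]] := hN.
rewrite hB.
have := @Nunit _ _ (D ^t*) M (esym rk); rewrite cadjK => ->; last by [].
by [].

Qed.
End Norm.



Lemma key (C : numClosedFieldType) (N0 p : nat) (M : 'M[C]_N0)
  (U : 'M[C]_(N0, p)) (G : 'M[C]_(p, N0)) (a : C) :
  M ^t* = M -> a^* = a -> a + a = 1 ->
  (1%:M - U *m G) *m M *m (1%:M - U *m G) ^t* = 0 ->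
  U *m ((M - a *: (U *m G *m M)) *m G ^t*) ^t*
  + (M - a *: (U *m G *m M)) *m G ^t* *m U ^t* = M.
Proof.
move=> hM ha h2 h.
move: h; rewrite cadjB cadj1 mulmxBl mul1mx !mulmxBr !mulmx1 !cadjM !mulmxA.
rewrite !cadjB cadjZ !cadjM hM ha cadjK !mulmxBl !mulmxBr -!scalemxAl -!scalemxAr !mulmxA.
move=> h.
set X1 := U *m G *m M in h *; set X2 := M *m G ^t* *m U ^t* in h *.
set X3 := U *m G *m M *m G ^t* *m U ^t* in h *.
have e : X1 - a *: X3 + (X2 - a *: X3) = X1 + X2 - X3.
  by rewrite addrACA -opprD -scalerDl h2 scale1r.
rewrite e -addrA; apply/esym/eqP; rewrite -subr_eq0 opprD addrA h.
by [].
Qed.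

Unset Implicit Arguments. Set Strict Implicit. Set Printing Implicit Defensive.

Theorem mainTheorem1 (C : numClosedFieldType) (n m p j : nat)
  (A : 'M[C]_n) (B : 'M[C]_(n, m)) (Cm : 'M[C]_(p, n)) (s : nat -> C)
  (V : 'M[C]_(n, j.+1 * p)) (K H : 'M[C]_(j.+1 * p, j * p))
  (Ct : 'M[C]_(j.+1 * p, p)) (L : 'M[C]_(j.+1 * p, j * p))
  (Y : 'M[C]_(j * p)) (U W : 'M[C]_(j.+1 * p, p)) :
  (0 < j)%N ->
  orth_BRAD A Cm s V K H ->
  Cm ^t* = V *m Ct ->
  L ^t* *m K \in unitmx ->
  let KL := invmx (K ^t* *m L) in
  let Aj := H ^t* *m L *m KL in
  let Bj := K ^t* *m V ^t* *m B in
  let Cj := Ct ^t* *m L *m KL in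
  Y ^t* = Y ->
  Aj ^t* *m Y + Y *m Aj + Cj ^t* *m Cj - Y *m Bj *m Bj ^t* *m Y = 0 ->
  let Xj := V *m K *m Y *m K ^t* *m V ^t* in
  perp_basis U L ->
  perp_basis W K ->
  W ^t* *m U \in unitmx /\
  (let UW := invmx (U ^t* *m W) in
   let T := K *m Y *m H ^t* *m W *m UW
            + (Ct - 2^-1 *: (U *m invmx (W ^t* *m U) *m W ^t* *m Ct))
              *m Ct ^t* *m W *m UW in
   forall (Q : 'M[C]_(j.+1 * p, p + p)) (R : 'M[C]_(p + p)),
     Q ^t* *m Q = 1%:M ->
     row_mx U T = Q *m R ->
     riccati A B Cm Xj = V *m (U *m T ^t* + T *m U ^t*) *m V ^t* /\
     (\rank (riccati A B Cm Xj) <= p + p)%N /\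
     (forall N : forall k, 'M[C]_k -> C, unitarily_invariant_norm N ->
        N n (riccati A B Cm Xj)
        = N (p + p)%N (R *m block_mx 0 1%:M 1%:M 0 *m R ^t*))).
Proof.
move=> hj hBR hCt hLK KL Aj Bj Cj hY hRic Xj hU hW.
have [_ [_ [hVV [_ [hAVK _ ] ] ] ] ] := hBR.
have hLU : L ^t* *m U = 0 := perp_ker hU.
have hKW : K ^t* *m W = 0 := perp_ker hW.
have hWK : W ^t* *m K = 0 by apply: cadj_eq0; rewrite cadjM cadjK.
have hKLu : K ^t* *m L \in unitmx.
  by rewrite -cadj_unit cadjM cadjK.
have hWU : W ^t* *m U \in unitmx.
  apply: unit_ker => q v hv.
  have [z hz] : exists z, U *m v = K *m z.
    by apply: (perp_range hW); rewrite mulmxA.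
  have hz0 : z = 0.
    have : L ^t* *m K *m z = 0 by rewrite -mulmxA -hz mulmxA hLU mul0mx.
    by move/(congr1 (mulmx (invmx (L ^t* *m K)))); rewrite mulmxA mulVmx // mul1mx mulmx0.
  by apply: (perp_free hU); rewrite hz hz0 mulmx0.
split => // UW T Q R hQ hQR.
have hAVK1 : K ^t* *m (V ^t* *m A) = H ^t* *m V ^t*.
  by apply: cadj_inj; rewrite !cadjM !cadjK ?mulmxA hAVK.
have hAVK2 : forall k (X : 'M_(k, j * p)), X *m K ^t* *m V ^t* *m A = X *m H ^t* *m V ^t*.
  by move=> k X; rewrite -!mulmxA hAVK1.
have hC : Cm = Ct ^t* *m V ^t* by rewrite -cadjM -hCt cadjK.
set Mm := H *m Y *m K ^t* + K *m Y *m H ^t* + Ct *m Ct ^t* - K *m Y *m Bj *m Bj ^t* *m Y *m K ^t*.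
have hRV : riccati A B Cm Xj = V *m Mm *m V ^t*.
  rewrite /riccati /Xj /Mm /Bj hC !cadjM !cadjK.
  rewrite !(mulmxDl, mulmxDr, mulmxBl, mulmxBr, mulmxN, mulNmx, mulmxA) hAVK hAVK2.
  by [].
have hMh : Mm ^t* = Mm.
  rewrite /Mm /Bj !(cadjD, cadjB, cadjN, cadjM, cadjK) hY !mulmxA.
  by congr (_ + _ + _); apply: addrC.
have [P eP] : exists P : 'M_(j.+1 * p, j * p), P = L *m KL by exists (L *m KL).
have hKP : K ^t* *m P = 1%:M by rewrite eP mulmxA mulmxV.
have hPK : P ^t* *m K = 1%:M by apply: cadj_inj; rewrite cadjM cadjK hKP cadj1.
have hKP2 : forall k (X : 'M_(k, j * p)), X *m K ^t* *m P = X.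
  by move=> k X; rewrite -mulmxA hKP mulmx1.
have hLP : L = P *m (K ^t* *m L) by rewrite eP -mulmxA mulVmx // mulmx1.
have hPMP : P ^t* *m Mm *m P = 0.
  have eAj : Aj = H ^t* *m P by rewrite /Aj eP mulmxA.
  have eCj : Cj = Ct ^t* *m P by rewrite /Cj eP mulmxA.
  rewrite -hRic eAj eCj /Mm /Bj.
  rewrite !(cadjM, cadjK, mulmxDl, mulmxDr, mulmxBl, mulmxBr, mulmxN, mulNmx, mulmxA).
  by rewrite !hKP2 hPK !mul1mx.
have hLML : L ^t* *m Mm *m L = 0.
  rewrite [in LHS]hLP cadjM.
  have -> : (K ^t* *m L) ^t* *m P ^t* *m Mm *m (P *m (K ^t* *m L)) =
    (K ^t* *m L) ^t* *m (P ^t* *m Mm *m P) *m (K ^t* *m L) by rewrite !mulmxA.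
  by rewrite hPMP mulmx0 mul0mx.
have hLML' : forall k (X : 'M_(j * p, k)), L ^t* *m (Mm *m (L *m X)) = 0.
  by move=> k X; rewrite mulmxA mulmxA hLML mul0mx.
have [G eG] : exists G : 'M_(p, j.+1 * p), G = invmx (W ^t* *m U) *m W ^t*.
  by exists (invmx (W ^t* *m U) *m W ^t*).
have hGU : G *m U = 1%:M by rewrite eG -mulmxA mulVmx.
have hGK : G *m K = 0 by rewrite eG -mulmxA hWK mulmx0.
have [Z hZ] : exists Z, (1%:M - U *m G) ^t* = L *m Z.
  apply: (perp_range hU); rewrite -cadjM mulmxBl mul1mx -mulmxA hGU mulmx1 subrr.
  by rewrite cadj0.
have hPi : (1%:M - U *m G) *m Mm *m (1%:M - U *m G) ^t* = 0.
  have -> : 1%:M - U *m G = Z ^t* *m L ^t* by rewrite -cadjM -hZ cadjK.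
  by rewrite cadjM !cadjK -!mulmxA hLML' mulmx0.
have hGa : G ^t* = W *m UW by rewrite eG cadjM cadjK cadjV cadjM cadjK.
have hT : T = (Mm - 2^-1 *: (U *m G *m Mm)) *m G ^t*.
  have hKW' : forall k (X : 'M_(p, k)), K ^t* *m (W *m X) = 0.
    by move=> k X; rewrite mulmxA hKW mul0mx.
  have hWK' : forall k (X : 'M_(j * p, k)), W ^t* *m (K *m X) = 0.
    by move=> k X; rewrite mulmxA hWK mul0mx.
  rewrite hGa /T /Mm eG /Bj.
  rewrite !(mulmxDl, mulmxDr, mulmxBl, mulmxBr, mulmxN, mulNmx, scalerDr, scalerBr, scalerN).
  rewrite -!mulmxA -?scalemxAl -?scalemxAr -!mulmxA !(hKW', hWK', mulmx0, scaler0, addr0, subr0, oppr0).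
  by rewrite !add0r addrA.
have h2c : (2^-1 : C)^* = 2^-1.
  by rewrite fmorphV rmorph_nat.
have h22 : (2^-1 : C) + 2^-1 = 1.
  have h2n : (2:C) != 0 by rewrite pnatr_eq0.
  by apply: (mulIf h2n); rewrite mulrDl mulVf // mul1r.
have hMm : U *m T ^t* + T *m U ^t* = Mm by rewrite hT; apply: key.
have hJ : U *m T ^t* + T *m U ^t* =
   row_mx U T *m block_mx 0 1%:M 1%:M 0 *m (row_mx U T) ^t*.
  rewrite cadj_row mul_row_block !mulmx0 !mulmx1 !add0r !addr0 mul_row_col.
  by rewrite addrC.
have hRic' : riccati A B Cm Xj =
   (V *m Q) *m (R *m block_mx 0 1%:M 1%:M 0 *m R ^t*) *m (V *m Q) ^t*.
  by rewrite hRV -hMm hJ hQR !cadjM !mulmxA.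
have hVQ : (V *m Q) ^t* *m (V *m Q) = 1%:M.
  by rewrite cadjM mulmxA -(mulmxA _ _ V) hVV mulmx1 hQ.
split; first by rewrite hRV hMm.
split.
  rewrite hRic'; apply: leq_trans (mxrankM_maxl _ _) _.
  apply: leq_trans (mxrankM_maxl _ _) _; exact: rank_leq_col.
move=> N hN; rewrite hRic'; exact: Niso.
Qed.
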